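(* Let $b\ge3$, $2\le j\le b-1$ and $0<\epsilon<\frac1b$. Then $\widehat M_1$ is attained, up to applying a common permutation to the coordinates of $p$ and $q$ and up to interchanging $p$ and $q$, at a pair of the form $p=(\epsilon^{(l_1)},\alpha^{(l_2)},\beta^{(b-l_1-l_2)})$, $q=(\delta^{(l_1)},\epsilon^{(l_2)},\eta^{(b-l_1-l_2)})$, with nonnegative integers $l_1,l_2$, $\alpha,\beta,\delta,\eta\ge\epsilon$ and $l_1\epsilon+l_2\alpha+(b-l_1-l_2)\beta=1=l_1\delta+l_2\epsilon+(b-l_1-l_2)\eta$.
   Context: For an integer $1\le j\le b-1$ and vectors $p,q\in\mathbb R^b$, $$\Psi_j(p;q)=\frac{1}{(b-j-1)!}\sum_{\sigma\in S_b}\Big(p_{\sigma(1)}\cdots p_{\sigma(j)}\,q_{\sigma(j+1)}+q_{\sigma(1)}\cdots q_{\sigma(j)}\,p_{\sigma(j+1)}\Big),$$ where $S_b$ is the set of permutations of $\{1,\dots,b\}$. $x^{(m)}$ denotes $m$ consecutive coordinates equal to $x$. Let $\mathcal P_b$ be the set of probability vectors in $\mathbb R^b$, $\widehat{\mathcal P}_b^0=\{p\in\mathcal P_b:p_i\ge\epsilon\ \forall i\}$ and $\widehat M_1=\sup_{p,q\in\widehat{\mathcal P}_b^0}\Psi_j(p;q)$. *)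

(* Defs.v *)
From HB Require Import structures.
From mathcomp Require Import all_boot all_order all_algebra all_fingroup.
From mathcomp Require Import all_classical all_reals.
Set Implicit Arguments. Unset Strict Implicit. Unset Printing Implicit Defensive.
Import Order.TTheory GRing.Theory Num.Theory.
Local Open Scope ring_scope.
Local Open Scope classical_set_scope.

(* Coordinates are 0-based: index i : 'I_b stands for coordinate i+1. *)

(* In 0-based indexing, s(1..j) are s i for i < j and s(j+1) is s i for i = j
   (the product over the singleton {i | i = j}). *)
Definition Psi (R : realType) (b j : nat) (p q : 'I_b -> R) : R :=
  ((b - j - 1)`!%:R)^-1 *
  \sum_(s : 'S_b)
     ( (\prod_(i < b | (i < j)%N) p (s i)) * (\prod_(i < b | val i == j) q (s i))
     + (\prod_(i < b | (i < j)%N) q (s i)) * (\prod_(i < b | val i == j) p (s i))).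

Definition Pb (R : realType) (b : nat) : set ('I_b -> R) :=
  [set p | (forall i, 0 <= p i) /\ \sum_(i < b) p i = 1].

Definition Phat0 (R : realType) (b : nat) (eps : R) : set ('I_b -> R) :=
  [set p | Pb p /\ forall i, eps <= p i].

Definition Mhat1 (R : realType) (b j : nat) (eps : R) : R :=
  sup [set x | exists p q : 'I_b -> R, Phat0 eps p /\ Phat0 eps q /\ x = Psi j p q].

Definition blockvec (R : realType) (b l1 l2 : nat) (x y z : R) : 'I_b -> R :=
  fun i => if (i < l1)%N then x else if (i < l1 + l2)%N then y else z.
Arguments blockvec {R} b l1 l2 x y z i.

(* Main.v *)
Require Import Defs.
From HB Require Import structures.
From mathcomp Require Import all_boot all_order all_algebra all_fingroup.
From mathcomp Require Import all_classical all_reals.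
From mathcomp Require Import all_analysis.
From mathcomp.algebra_tactics Require Import ring lra.
From mathcomp Require Import zify.
Import Order.TTheory GRing.Theory Num.Theory.
Import numFieldTopology.Exports numFieldNormedType.Exports.
Local Open Scope ring_scope.

Section Alg.
Variables (R : realType) (b j : nat).
Implicit Types (x y : 'I_b -> R).

Definition T1 (s : 'S_b) x y :=
  (\prod_(i < b | (i < j)%N) x (s i)) * (\prod_(i < b | val i == j) y (s i)).

Lemma Psi_swap x y : Psi j x y = Psi j y x.
Proof. by rewrite /Psi; congr (_ * _); apply: eq_bigr => s _; rewrite addrC. Qed.

Lemma Psi_perm (t : 'S_b) x y :
  Psi j (fun l => x (t l)) (fun l => y (t l)) = Psi j x y.
Proof.
rewrite /Psi; congr (_ * _).
rewrite [RHS](reindex_inj (mulIg t)) /=; apply: eq_bigr => s _.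
by congr (_ * _ + _ * _); apply: eq_bigr => i _; rewrite permM.
Qed.

Definition Fp (s : 'S_b) x y (m : 'I_b) : R :=
  if (m < j)%N then x (s m) else if val m == j then y (s m) else 1.
Definition Gp (s : 'S_b) x y (m : 'I_b) : R :=
  if (m < j)%N then x (s m) else if val m == j then y (s m) else 0.

Lemma T1E s x y : T1 s x y = \prod_m Fp s x y m.
Proof.
rewrite /T1 (big_mkcond (fun m : 'I_b => (m < j)%N)) (big_mkcond (fun m : 'I_b => val m == j)).
rewrite -big_split /=; apply: eq_bigr => m _; rewrite /Fp.
case: ifP => mj; case: eqP => // mj'; rewrite ?mulr1 ?mul1r //.
by rewrite mj' ltnn in mj.
Qed.

Lemma prod_quad (a c : 'I_b) (f g : 'I_b -> R) t : a != c ->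
  (forall m, m != a -> m != c -> g m = 0) ->
  \prod_m (f m + t * g m) + \prod_m (f m + (- t) * g m) =
  2 * \prod_m f m + 2 * t ^+ 2 *
     (g a * g c * \prod_(m | (m != a) && (m != c)) f m).
Proof.
move=> ac g0.
rewrite (bigD1 a) //= [in X in _ + X](bigD1 a) //= [in X in _ = X](bigD1 a) //=.
rewrite (bigD1 c) 1?eq_sym //= [in X in _ + X](bigD1 c) 1?eq_sym //=.
rewrite [in X in _ = X](bigD1 c) 1?eq_sym //=.
have E u : \prod_(m | (m != a) && (m != c)) (f m + u * g m) =
           \prod_(m | (m != a) && (m != c)) f m.
  by apply: eq_bigr => m /andP[ma mc]; rewrite g0 // mulr0 addr0.
rewrite !E; set K := \prod_(m | _) f m; ring.
Qed.

Definition dev (i k : 'I_b) (d : R) (l : 'I_b) : R :=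
  if l == i then d else if l == k then - d else 0.
Definition shift x (i k : 'I_b) d t : 'I_b -> R := fun l => x l + t * dev i k d l.

Lemma Fp_shift s x y (i k : 'I_b) (dx dy t : R) m :
  Fp s (shift x i k dx t) (shift y i k dy t) m =
  Fp s x y m + t * Gp s (dev i k dx) (dev i k dy) m.
Proof. by rewrite /Fp /Gp /shift; do 2?case: ifP => _; rewrite ?mulr0 ?addr0. Qed.

Definition Kq (i k : 'I_b) (s : 'S_b) x y u v :=
  Gp s u v ((s^-1)%g i) * Gp s u v ((s^-1)%g k) *
  \prod_(m | (m != (s^-1)%g i) && (m != (s^-1)%g k)) Fp s x y m.

Lemma T1_quad s x y (i k : 'I_b) (dx dy t : R) : i != k ->
  T1 s (shift x i k dx t) (shift y i k dy t) +
  T1 s (shift x i k dx (-t)) (shift y i k dy (-t)) =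
  2 * T1 s x y + 2 * t ^+ 2 * Kq i k s x y (dev i k dx) (dev i k dy).
Proof.
move=> ik; rewrite !T1E.
under eq_bigr do rewrite Fp_shift.
under [X in _ + X]eq_bigr do rewrite Fp_shift.
apply: prod_quad.
  by apply: contra ik => /eqP/perm_inj ->.
move=> m mi mk; rewrite /Gp /dev.
have si : (s m == i) = false.
  by apply/negbTE; apply: contra mi => /eqP <-; rewrite permK.
have sk : (s m == k) = false.
  by apply/negbTE; apply: contra mk => /eqP <-; rewrite permK.
by rewrite si sk; do 2?case: ifP => _.
Qed.

Definition cstP := ((b - j - 1)`!%:R : R)^-1.

Definition Cq i k x y dx dy := cstP *
  \sum_(s : 'S_b) (Kq i k s x y (dev i k dx) (dev i k dy) +
                   Kq i k s y x (dev i k dy) (dev i k dx)).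

Lemma Psi_quad2 x y (i k : 'I_b) (dx dy t : R) : i != k ->
  Psi j (shift x i k dx t) (shift y i k dy t) +
  Psi j (shift x i k dx (-t)) (shift y i k dy (-t)) =
  2 * Psi j x y + 2 * t ^+ 2 * Cq i k x y dx dy.
Proof.
move=> ik; rewrite /Psi /Cq -/cstP -mulrDr -big_split /=.
have E s : (T1 s (shift x i k dx t) (shift y i k dy t) +
    T1 s (shift y i k dy t) (shift x i k dx t)) +
   (T1 s (shift x i k dx (-t)) (shift y i k dy (-t)) +
    T1 s (shift y i k dy (-t)) (shift x i k dx (-t))) =
   2 * (T1 s x y + T1 s y x) + 2 * t ^+ 2 *
   (Kq i k s x y (dev i k dx) (dev i k dy) + Kq i k s y x (dev i k dy) (dev i k dx)).
  have := T1_quad s x y i k dx dy t ik; have := T1_quad s y x i k dy dx t ik.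
  move=> H1 H2; rewrite addrACA H2 H1; ring.
rewrite (eq_bigr _ (fun s _ => E s)) big_split /= -!mulr_sumr.
rewrite /T1; ring.
Qed.

Lemma shift_neg x (i k : 'I_b) (d t : R) : i != k -> x i = x k ->
  shift x i k d (- t) = (fun l => shift x i k d t (tperm i k l)).
Proof.
move=> ik xik; have ki : k != i by rewrite eq_sym.
apply: funext => l; rewrite /shift /dev.
case: tpermP => [->|->|/eqP li /eqP lk].
- by rewrite eqxx (negbTE ki) eqxx xik mulrN mulNr; reflexivity.
- by rewrite eqxx (negbTE ki) eqxx -xik mulrNN; reflexivity.
- by rewrite (negbTE li) (negbTE lk) !mulr0.
Qed.

Lemma Psi_ray x y (i k : 'I_b) (dx dy t : R) : i != k -> x i = x k -> y i = y k ->
  Psi j (shift x i k dx t) (shift y i k dy t) =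
  Psi j x y + t ^+ 2 * Cq i k x y dx dy.
Proof.
move=> ik xik yik.
have := Psi_quad2 x y i k dx dy t ik.
rewrite (shift_neg x i k dx t ik xik) (shift_neg y i k dy t ik yik).
rewrite (Psi_perm (tperm i k) (shift x i k dx t) (shift y i k dy t)).
move=> H; lra.
Qed.

End Alg.
Arguments dev {R b} i k d l.
Arguments shift {R b} x i k d t _.
Arguments Cq {R b} j i k x y dx dy.
Arguments Kq {R b} j i k s x y u v.
Arguments Fp {R b} j s x y m.
Arguments Gp {R b} j s x y m.
Arguments T1 {R b} j s x y.

Section Neg.
Variables (R : realType) (b j : nat).
Implicit Types (x y : 'I_b -> R).

Lemma dev0 (i k l : 'I_b) : dev i k (0 : R) l = 0.
Proof. by rewrite /dev oppr0; do 2?case: ifP. Qed.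

Lemma cst_gt0 : 0 < cstP R b j.
Proof. by rewrite /cstP invr_gt0 ltr0n fact_gt0. Qed.

Lemma Fp_gt0 (s : 'S_b) x y m : (forall l, 0 < x l) -> (forall l, 0 < y l) ->
  0 < Fp j s x y m.
Proof. by move=> xp yp; rewrite /Fp; do 2?case: ifP. Qed.

Lemma K_gt0 (i k : 'I_b) (s : 'S_b) x y : (forall l, 0 < x l) -> (forall l, 0 < y l) ->
  0 < \prod_(m | (m != (s^-1)%g i) && (m != (s^-1)%g k)) Fp j s x y m.
Proof. by move=> xp yp; apply: prodr_gt0 => m _; apply: Fp_gt0. Qed.

Lemma Cq_neg x y (i k : 'I_b) (d : R) : (1 < b)%N -> (2 <= j)%N ->
  i != k -> (forall l, 0 < x l) -> (forall l, 0 < y l) -> d != 0 ->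
  Cq j i k x y 0 d < 0.
Proof.
move=> b1 j2 ik xp yp d0.
have ki : k != i by rewrite eq_sym.
rewrite /Cq pmulr_rlt0 ?cst_gt0 //.
have neqik (s : 'S_b) : (val ((s^-1)%g i) == val ((s^-1)%g k)) = false.
  apply/negbTE; apply: contra ik => /eqP/val_inj/perm_inj ->; by [].
have A_le0 s : Kq j i k s x y (dev i k 0) (dev i k d) <= 0.
  rewrite /Kq; apply: mulr_le0_ge0; last exact/ltW/K_gt0.
  rewrite /Gp !permKV !dev0 /dev eqxx (negbTE ki) eqxx.
  move: (neqik s).
  case: ifP => _; first by rewrite mul0r.
  case: ifP => [/eqP ->|_]; last by rewrite mul0r.
  case: ifP => _; first by rewrite mulr0.
  by case: ifP => [/eqP ->|_]; rewrite ?eqxx // mulr0.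
have B_le0 s : Kq j i k s y x (dev i k d) (dev i k 0) <= 0.
  rewrite /Kq; apply: mulr_le0_ge0; last exact/ltW/K_gt0.
  rewrite /Gp !permKV !dev0 /dev eqxx (negbTE ki) eqxx.
  case: ifP => _; last by case: ifP => _; rewrite mul0r.
  case: ifP => _; last by case: ifP => _; rewrite mulr0.
  by rewrite mulrN oppr_le0 -expr2 sqr_ge0.
pose o0 : 'I_b := Ordinal (ltnW b1).
pose o1 : 'I_b := Ordinal b1.
pose k' := tperm i o0 k.
have k'o0 : k' != o0.
  by rewrite /k' -{2}(tpermL i o0) (inj_eq (@perm_inj _ _)).
have o0o1 : o0 != o1 by [].
pose sg : 'S_b := (tperm i o0 * tperm k' o1)%g.
pose s0 : 'S_b := (sg^-1)%g.
have s0i : (s0^-1)%g i = o0.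
  by rewrite /s0 invgK /sg permM tpermL tpermD // eq_sym.
have s0k : (s0^-1)%g k = o1.
  by rewrite /s0 invgK /sg permM -/k' tpermL.
have B_lt0 : Kq j i k s0 y x (dev i k d) (dev i k 0) < 0.
  rewrite /Kq pmulr_llt0; last exact/K_gt0.
  rewrite /Gp !permKV s0i s0k /=.
  have -> : (0 < j)%N by apply: leq_trans j2.
  have -> : (1 < j)%N by [].
  rewrite /dev eqxx (negbTE ki) eqxx mulrN oppr_lt0 -expr2.
  by rewrite lt_def sqr_ge0 andbT sqrf_eq0.
rewrite (bigD1 s0) //=.
have := sumr_le0 (P := fun s => s != s0)
  (F := fun s => Kq j i k s x y (dev i k 0) (dev i k d) +
                 Kq j i k s y x (dev i k d) (dev i k 0)) (index_enum _)
  (fun s _ => ltac:(have := A_le0 s; have := B_le0 s; lra)).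
have := A_le0 s0.
lra.
Qed.

End Neg.

Section Struct.
Variables (R : realType) (b j : nat) (eps : R).
Implicit Types (x y p q z w : 'I_b -> R).

Definition isMax p q := Phat0 eps p /\ Phat0 eps q /\
  forall p' q', Phat0 eps p' -> Phat0 eps q' -> Psi j p' q' <= Psi j p q.

Lemma feasP z : Phat0 eps z -> (forall l, eps <= z l) /\ \sum_l z l = 1.
Proof. by case=> [[_ s] e]. Qed.

Lemma mk_feas z : 0 <= eps -> (forall l, eps <= z l) -> \sum_l z l = 1 -> Phat0 eps z.
Proof. by move=> e0 ze s; split; [split => // l; apply: le_trans (ze l)|]. Qed.

Lemma sum2 (i k : 'I_b) z w : i != k ->
  (forall l, l != i -> l != k -> w l = z l) -> w i + w k = z i + z k ->
  \sum_l w l = \sum_l z l.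
Proof.
move=> ik zz zik.
rewrite (bigD1 i) //= [RHS](bigD1 i) //= (bigD1 k) 1?eq_sym //= [in RHS](bigD1 k) 1?eq_sym //=.
rewrite addrA zik -addrA; congr (_ + (_ + _)).
by apply: eq_bigr => l /andP[li lk]; apply: zz.
Qed.

Lemma shift_i x (i k : 'I_b) (d t : R) : shift x i k d t i = x i + t * d.
Proof. by rewrite /shift /dev eqxx. Qed.

Lemma shift_k x (i k : 'I_b) (d t : R) : i != k -> shift x i k d t k = x k - t * d.
Proof. by move=> ik; rewrite /shift /dev eq_sym (negbTE ik) eqxx mulrN. Qed.

Lemma shift_o x (i k l : 'I_b) (d t : R) : l != i -> l != k -> shift x i k d t l = x l.
Proof. by move=> li lk; rewrite /shift /dev (negbTE li) (negbTE lk) mulr0 addr0. Qed.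

Lemma shift_sum x (i k : 'I_b) (d t : R) : i != k ->
  \sum_l shift x i k d t l = \sum_l x l.
Proof.
move=> ik; apply: (sum2 _ _ _ _ ik) => [l li lk|]; first exact: shift_o.
by rewrite shift_i shift_k //; ring.
Qed.

Definition avg x (i k : 'I_b) : 'I_b -> R :=
  fun l => if (l == i) || (l == k) then (x i + x k) / 2 else x l.

Lemma avg_shift x (i k : 'I_b) : i != k ->
  x = shift (avg x i k) i k ((x i - x k) / 2) 1.
Proof.
move=> ik; apply: funext => l; rewrite /shift /avg /dev.
case: (eqVneq l i) => [->|li] /=; first by field.
case: (eqVneq l k) => [->|lk] /=; first by field.
by rewrite mulr0 addr0.
Qed.

Lemma avg_i x (i k : 'I_b) : avg x i k i = avg x i k k.
Proof. by rewrite /avg !eqxx orbT. Qed.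

Lemma avg_sum x (i k : 'I_b) : i != k -> \sum_l avg x i k l = \sum_l x l.
Proof.
move=> ik; apply: (sum2 _ _ _ _ ik) => [l li lk|].
  by rewrite /avg (negbTE li) (negbTE lk).
by rewrite /avg !eqxx orbT /=; field.
Qed.

Lemma avg_ge x (i k : 'I_b) l : (forall l, eps <= x l) -> eps <= avg x i k l.
Proof.
move=> xe; rewrite /avg; case: ifP => // _.
have := xe i; have := xe k; lra.
Qed.

Hypotheses (b1 : (1 < b)%N) (j2 : (2 <= j)%N) (e0 : 0 < eps).

Lemma P_share p q (i k : 'I_b) : isMax p q -> p i = eps -> p k = eps -> q i = q k.
Proof.
move=> [pf [qf pmax]] pie pke.
case: (eqVneq i k) => [-> //|ik].
apply/eqP; apply/negPn/negP => qik.
have [pe ps] := feasP _ pf; have [qe qs] := feasP _ qf.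
set qm := avg q i k.
have qmf : Phat0 eps qm.
  apply: mk_feas; first exact: ltW.
    by move=> l; apply: avg_ge.
  by rewrite avg_sum.
have Hp : p = shift p i k 0 1.
  by apply: funext => l; rewrite /shift dev0 mulr0 addr0.
have Hq := avg_shift q i k ik.
have pik : p i = p k by rewrite pie pke.
have := @Psi_ray R b j p qm i k 0 ((q i - q k) / 2) 1 ik pik (avg_i q i k).
rewrite -Hp -Hq expr1n mul1r.
have Cn : Cq j i k p qm 0 ((q i - q k) / 2) < 0.
  apply: Cq_neg => //.
  - by move=> l; apply: lt_le_trans (pe l).
  - by move=> l; apply: lt_le_trans (avg_ge q i k l qe).
  - by rewrite mulf_eq0 negb_or subr_eq0 qik /= invr_eq0 pnatr_eq0.
have := pmax p qm pf qmf.
lra.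
Qed.


Lemma isMax_swap p q : isMax p q -> isMax q p.
Proof.
move=> [pf [qf m]]; split=> //; split=> // p' q' p'f q'f.
by rewrite Psi_swap [Psi j q p]Psi_swap; apply: m.
Qed.

Lemma Q_share p q (i k : 'I_b) : isMax p q -> q i = eps -> q k = eps -> p i = p k.
Proof. by move=> /isMax_swap; apply: P_share. Qed.

End Struct.
Arguments isMax {R b} j eps p q.
Arguments feasP {R b eps z}.
Arguments mk_feas {R b eps z}.
Arguments sum2 {R b} i k z w.
Arguments shift_i {R b} x i k d t.
Arguments shift_k {R b} x i k d t.
Arguments shift_o {R b} x i k l d t.
Arguments shift_sum {R b} x i k d t.
Arguments avg {R b} x i k _.
Arguments avg_shift {R b} x i k.
Arguments avg_i {R b} x i k.
Arguments avg_sum {R b} x i k.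
Arguments avg_ge {R b eps} x i k l.

Section ExT.
Variable R : realType.

Lemma exT1 (a1 a2 d1 d2 : R) : 0 < a1 -> `|d1| < a1 -> d1 != 0 ->
  a1 / `|d1| * `|d2| <= a2 ->
  exists T, 1 < T /\ `|T * d1| <= a1 /\ `|T * d2| <= a2 /\ `|T * d1| = a1.
Proof.
move=> a1p d1a d10 H; have nd1 : 0 < `|d1| by rewrite normr_gt0.
exists (a1 / `|d1|).
have Tp : 0 < a1 / `|d1| by rewrite divr_gt0.
rewrite !(normrM (a1 / `|d1|)) (gtr0_norm Tp) divfK ?normr_eq0 //.
split; first by rewrite ltr_pdivlMr // mul1r.
by split.
Qed.

Lemma exT (a1 a2 d1 d2 : R) : 0 < a1 -> 0 < a2 -> `|d1| < a1 -> `|d2| < a2 ->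
  (d1 != 0) || (d2 != 0) ->
  exists T, 1 < T /\ `|T * d1| <= a1 /\ `|T * d2| <= a2 /\
     (`|T * d1| = a1 \/ `|T * d2| = a2).
Proof.
move=> a1p a2p d1a d2a.
case: (eqVneq d1 0) => [->|d10] /=.
  move=> d20.
  have [|T [T1 [h1 [h2 h3]]]] := exT1 a2 a1 d2 0 a2p d2a d20.
    by rewrite normr0 mulr0 ltW.
  by exists T; split=> //; split=> //; split=> //; right.
move=> _.
case: (eqVneq d2 0) => [->|d20].
  have [|T [T1 [h1 [h2 h3]]]] := exT1 a1 a2 d1 0 a1p d1a d10.
    by rewrite normr0 mulr0 ltW.
  by exists T; split=> //; split=> //; split=> //; left.
have nd1 : 0 < `|d1| by rewrite normr_gt0.
have nd2 : 0 < `|d2| by rewrite normr_gt0.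
have [h|h] := leP (a1 / `|d1|) (a2 / `|d2|).
  have [|T [T1 [h1 [h2 h3]]]] := exT1 a1 a2 d1 d2 a1p d1a d10.
    by rewrite -ler_pdivlMr.
  by exists T; split=> //; split=> //; split=> //; left.
have [|T [T1 [h1 [h2 h3]]]] := exT1 a2 a1 d2 d1 a2p d2a d20.
  by rewrite -ler_pdivlMr // ltW.
by exists T; split=> //; split=> //; split=> //; right.
Qed.

End ExT.


Section Step.
Variables (R : realType) (b j : nat) (eps : R).
Implicit Types (x y p q z w : 'I_b -> R).
Hypotheses (b1 : (1 < b)%N) (j2 : (2 <= j)%N) (e0 : 0 < eps).

Lemma shift_feas x (i k : 'I_b) (d t : R) : i != k -> x i = x k ->
  (forall l, eps <= x l) -> \sum_l x l = 1 -> `|t * d| <= x i - eps ->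
  Phat0 eps (shift x i k d t).
Proof.
move=> ik xik xe xs td.
have := td; rewrite ler_norml => /andP[h1 h2].
apply: mk_feas; first exact: ltW.
  move=> l; case: (eqVneq l i) => [->|li]; first by rewrite shift_i; lra.
  case: (eqVneq l k) => [->|lk]; first by rewrite shift_k // -xik; lra.
  by rewrite shift_o.
by rewrite shift_sum.
Qed.

Lemma I_step p q (i k : 'I_b) : isMax j eps p q ->
  eps < p i -> eps < q i -> eps < p k -> eps < q k ->
  (p i != p k) || (q i != q k) ->
  exists p' q', isMax j eps p' q' /\
    (forall l, l != i -> l != k -> p' l = p l /\ q' l = q l) /\
    ((p' i = eps \/ q' i = eps) \/ (p' k = eps \/ q' k = eps)).
Proof.
move=> [pf [qf pmax]] pi qi pk qk neq.
case: (eqVneq i k) => [eik|ik]; first by move: neq; rewrite eik !eqxx.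
have [pe ps] := feasP pf; have [qe qs] := feasP qf.
set pm := avg p i k; set qm := avg q i k.
set d1 := (p i - p k) / 2; set d2 := (q i - q k) / 2.
have pme l : eps <= pm l by apply: avg_ge.
have qme l : eps <= qm l by apply: avg_ge.
have pms : \sum_l pm l = 1 by rewrite avg_sum.
have qms : \sum_l qm l = 1 by rewrite avg_sum.
have pmi : pm i = (p i + p k) / 2 by rewrite /pm /avg eqxx.
have qmi : qm i = (q i + q k) / 2 by rewrite /qm /avg eqxx.
have pmik : pm i = pm k := avg_i p i k.
have qmik : qm i = qm k := avg_i q i k.
have [T [T1 [h1 [h2 h3]]]] : exists T, 1 < T /\ `|T * d1| <= pm i - eps /\
    `|T * d2| <= qm i - eps /\ (`|T * d1| = pm i - eps \/ `|T * d2| = qm i - eps).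
  apply: exT.
  - by rewrite pmi; lra.
  - by rewrite qmi; lra.
  - by rewrite pmi ltr_norml /d1; apply/andP; split; lra.
  - by rewrite qmi ltr_norml /d2; apply/andP; split; lra.
  - move: neq; apply: contraLR; rewrite negb_or !negbK /d1 /d2 => /andP[].
    rewrite !mulf_eq0 !invr_eq0 !pnatr_eq0 !orbF !subr_eq0 => -> ->.
    by [].
have Hp := avg_shift p i k ik; have Hq := avg_shift q i k ik.
have ray t := @Psi_ray R b j pm qm i k d1 d2 t ik pmik qmik.
set C := Cq j i k pm qm d1 d2 in ray.
have pmf : Phat0 eps pm by apply: mk_feas => //; exact: ltW.
have qmf : Phat0 eps qm by apply: mk_feas => //; exact: ltW.
have pTf : Phat0 eps (shift pm i k d1 T) by apply: shift_feas.
have qTf : Phat0 eps (shift qm i k d2 T) by apply: shift_feas.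
have H1 : Psi j p q = Psi j pm qm + C.
  by rewrite {1}Hp {1}Hq ray expr1n mul1r.
have H0 := pmax pm qm pmf qmf.
have HT := pmax _ _ pTf qTf; rewrite ray in HT.
have C0 : C = 0.
  apply/eqP; rewrite eq_le; apply/andP; split; last by lra.
  have : (T ^+ 2 - 1) * C <= 0 by lra.
  rewrite pmulr_rle0 // subr_gt0 expr2.
  by nra.
exists (shift pm i k d1 T), (shift qm i k d2 T); split.
  split=> //; split=> // p' q' p'f q'f.
  by rewrite ray C0 mulr0 addr0 -[Psi j pm qm]addr0 -C0 -H1; apply: pmax.
split.
  move=> l li lk; rewrite !shift_o //.
  by rewrite /pm /qm /avg (negbTE li) (negbTE lk).
rewrite !shift_i !shift_k // -pmik -qmik.
case: h3 => h3.
  have [s|s] := leP 0 (T * d1).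
    by rewrite ger0_norm in h3 => //; right; left; lra.
  by rewrite ltr0_norm in h3 => //; left; left; lra.
have [s|s] := leP 0 (T * d2).
  by rewrite ger0_norm in h3 => //; right; right; lra.
by rewrite ltr0_norm in h3 => //; left; right; lra.
Qed.

End Step.

Section Descent.
Variables (R : realType) (b j : nat) (eps : R).
Implicit Types (x y p q z w : 'I_b -> R).
Hypotheses (b1 : (1 < b)%N) (j2 : (2 <= j)%N) (e0 : 0 < eps).

Definition Iset p q := [set l : 'I_b | (eps < p l) && (eps < q l)].

Lemma good_exists p q : isMax j eps p q -> exists p' q', isMax j eps p' q' /\
  forall i k, eps < p' i -> eps < q' i -> eps < p' k -> eps < q' k ->
    p' i = p' k /\ q' i = q' k.
Proof.
move: {2}#|Iset p q|.+1 (ltnSn #|Iset p q|) => n.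
elim: n p q => // n IH p q In pm.
case: (boolP [forall i, [forall k, ((eps < p i) && (eps < q i) && (eps < p k) && (eps < q k))
   ==> ((p i == p k) && (q i == q k))]]) => [/forallP H|].
  exists p, q; split=> // i k pi qi pk qk.
  move: (H i) => /forallP/(_ k)/implyP; rewrite pi qi pk qk => /(_ isT) /andP[/eqP -> /eqP ->].
  by [].
rewrite negb_forall => /existsP[i]; rewrite negb_forall => /existsP[k].
rewrite negb_imply => /andP[/andP[/andP[/andP[pi qi] pk] qk]]; rewrite negb_and => neq.
have [p' [q' [m' [oth bd]]]] := @I_step R b j eps e0 p q i k pm pi qi pk qk neq.
apply: (IH p' q') => //.
have : Iset p' q' \proper Iset p q.
  apply/properP; split.
    apply/fintype.subsetP => l; rewrite !inE.
    case: (eqVneq l i) => [->|li]; first by rewrite pi qi.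
    case: (eqVneq l k) => [->|lk]; first by rewrite pk qk.
    by have [-> ->] := oth l li lk.
  case: bd => [h|h]; [exists i; rewrite !inE ?pi ?qi // | exists k; rewrite !inE ?pk ?qk //];
    by case: h => ->; rewrite ltxx // andbF.
move/proper_card => lt; exact: leq_trans lt In.
Qed.

End Descent.

Section Cont.
Local Open Scope classical_set_scope.
Variables (R : realType) (T : topologicalType).
Implicit Types (f g : T -> R).

Lemma contC (c : R) : continuous (fun _ : T => c).
Proof. by move=> x; apply: cvg_cst. Qed.

Lemma contD f g : continuous f -> continuous g -> continuous (fun x => f x + g x).
Proof. by move=> cf cg x; apply: cvgD; [exact: cf|exact: cg]. Qed.

Lemma contM f g : continuous f -> continuous g -> continuous (fun x => f x * g x).
Proof. by move=> cf cg x; apply: cvgM; [exact: cf|exact: cg]. Qed.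

Lemma cont_sum (I : Type) (r : seq I) (P : pred I) (F : I -> T -> R) :
  (forall i, continuous (F i)) -> continuous (fun x => \sum_(i <- r | P i) F i x).
Proof.
move=> cF; elim: r => [|a r IH].
  have -> : (fun x => \sum_(i <- [::] | P i) F i x) = (fun _ => 0).
    by apply: funext => x; rewrite big_nil.
  exact: contC.
have -> : (fun x => \sum_(i <- a :: r | P i) F i x) =
          (fun x => (if P a then F a x else 0) + \sum_(i <- r | P i) F i x).
  by apply: funext => x; rewrite big_cons; case: ifP; rewrite ?add0r.
apply: contD => //; case: (P a); [exact: cF|exact: contC].
Qed.

Lemma cont_prod (I : Type) (r : seq I) (P : pred I) (F : I -> T -> R) :
  (forall i, continuous (F i)) -> continuous (fun x => \prod_(i <- r | P i) F i x).
Proof.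
move=> cF; elim: r => [|a r IH].
  have -> : (fun x => \prod_(i <- [::] | P i) F i x) = (fun _ => 1).
    by apply: funext => x; rewrite big_nil.
  exact: contC.
have -> : (fun x => \prod_(i <- a :: r | P i) F i x) =
          (fun x => (if P a then F a x else 1) * \prod_(i <- r | P i) F i x).
  by apply: funext => x; rewrite big_cons; case: ifP; rewrite ?mul1r.
apply: contM => //; case: (P a); [exact: cF|exact: contC].
Qed.

End Cont.

Section Exist.
Local Open Scope classical_set_scope.
Variables (R : realType) (b j : nat) (eps : R).
Hypotheses (e0 : 0 < eps) (eb : eps < (b%:R)^-1).

Let V := 'rV[R]_(b + b).
Definition pv (v : V) : 'I_b -> R := fun i => v ord0 (lshift b i).
Definition qv (v : V) : 'I_b -> R := fun i => v ord0 (rshift b i).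
Let A := [set v : V | Phat0 eps (pv v) /\ Phat0 eps (qv v)].
Let f (v : V) := Psi j (pv v) (qv v).

Lemma le1 (z : 'I_b -> R) i : Phat0 eps z -> z i <= 1.
Proof.
case=> [[z0 zs] _]; rewrite -zs (bigD1 i) //= lerDl.
by apply: sumr_ge0 => l _.
Qed.

Lemma f_cont : continuous f.
Proof.
rewrite /f /Psi /pv /qv.
apply: contM; first exact: contC.
apply: cont_sum => s; apply: contD; apply: contM; apply: cont_prod => i;
  exact: coord_continuous.
Qed.

Lemma A_closed : closed A.
Proof.
have -> : A = \bigcap_(l in [set: 'I_(b + b)]) [set v : V | eps <= v ord0 l]
    `&` [set v : V | \sum_i pv v i = 1] `&` [set v : V | \sum_i qv v i = 1].
  apply/seteqP; split => v /=.
    move=> [[[_ ps] pe] [[_ qs] qe]]; split; [split|] => //.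
    move=> l _; rewrite -(splitK l); case: (fintype.split l) => i /=; [exact: pe|exact: qe].
  move=> [[H ps] qs]; split; (split; [split|]) => // i;
    try (apply: le_trans (ltW e0) _); exact: H.
apply: closedI; [apply: closedI|].
- apply: closed_bigI => l _.
  have H := (continuous_closedP _).1 (@coord_continuous R 1 (b + b) ord0 l) _ (@closed_ge R eps). exact: H.
- have H := (continuous_closedP _).1
    (@cont_sum R V _ (index_enum _) xpredT (fun i (v : V) => v ord0 (lshift b i))
       (fun i => @coord_continuous R 1 (b + b) ord0 (lshift b i))) _ (@closed_eq R 1).
  exact H.
- have H := (continuous_closedP _).1
    (@cont_sum R V _ (index_enum _) xpredT (fun i (v : V) => v ord0 (rshift b i))
       (fun i => @coord_continuous R 1 (b + b) ord0 (rshift b i))) _ (@closed_eq R 1).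
  exact H.
Qed.

Lemma A_compact : compact A.
Proof.
have K := @rV_compact R (b + b) (fun _ => `[0, 1]%classic) (fun _ => @segment_compact R 0 1).
apply (subclosed_compact A_closed K).
move=> v [pf qf] l /=; rewrite -(splitK l); case: (fintype.split l) => i /=;
  rewrite in_itv /=; apply/andP; split.
- by apply: le_trans (ltW e0) _; case: pf => _; apply.
- exact: le1 pf.
- by apply: le_trans (ltW e0) _; case: qf => _; apply.
- exact: le1 qf.
Qed.

Lemma unif_feas : (0 < b)%N -> Phat0 eps (fun _ : 'I_b => (b%:R : R)^-1).
Proof.
move=> b0; apply: mk_feas => //; first exact: ltW.
  by move=> _; apply: ltW.
rewrite sumr_const card_ord -[_ *+ b]mulr_natr mulVf //.
by rewrite pnatr_eq0 -lt0n.
Qed.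

Lemma exists_max : (0 < b)%N -> exists p q : 'I_b -> R, isMax j eps p q.
Proof.
move=> b0.
pose mk (p q : 'I_b -> R) : V := row_mx (\row_i p i) (\row_i q i).
have pvmk p q : pv (mk p q) = p.
  by apply: funext => i; rewrite /pv /mk row_mxEl mxE.
have qvmk p q : qv (mk p q) = q.
  by apply: funext => i; rewrite /qv /mk row_mxEr mxE.
have A0 : A !=set0.
  exists (mk (fun _ => (b%:R)^-1) (fun _ => (b%:R)^-1)).
  by rewrite /A /= pvmk qvmk; split; apply: unif_feas.
have [c cA cmax] := compact_EVT_max A0 A_compact (continuous_subspaceT f_cont).
move: cA; rewrite inE => -[pf qf].
exists (pv c), (qv c); split=> //; split=> // p' q' p'f q'f.
have := cmax (mk p' q'); rewrite /f pvmk qvmk; apply.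
by rewrite inE /A /= pvmk qvmk.
Qed.

End Exist.

Section Fin.
Variables (R : realType) (b j : nat) (eps : R).

Lemma sum_blockvec (l1 l2 : nat) (x y z : R) : (l1 + l2 <= b)%N ->
  \sum_(i < b) blockvec b l1 l2 x y z i =
  l1%:R * x + l2%:R * y + (b - l1 - l2)%:R * z.
Proof.
move=> hb.
set F := fun n => if (n < l1)%N then x else if (n < l1 + l2)%N then y else z.
rewrite -(big_mkord xpredT F).
rewrite (big_cat_nat _ (n := l1)) ?leq0n //=; last exact: leq_trans (leq_addr _ _) hb.
rewrite [X in _ + X](big_cat_nat _ (n := l1 + l2)) ?leq_addr //=.
rewrite (eq_big_nat _ _ (m := 0) (n := l1) (F1 := F) (F2 := fun _ => x)); last by move=> n /andP[_ h]; rewrite /F h.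
rewrite (eq_big_nat _ _ (m := l1) (n := l1 + l2) (F1 := F) (F2 := fun _ => y)); last first.
  by move=> n /andP[h1 h2]; rewrite /F ltnNge h1 h2.
rewrite (eq_big_nat _ _ (m := l1 + l2) (n := b) (F1 := F) (F2 := fun _ => z)); last first.
  move=> n /andP[h1 _].
  have n1 : (n < l1)%N = false by rewrite ltnNge (leq_trans (leq_addr _ _) h1).
  have n2 : (n < l1 + l2)%N = false by rewrite ltnNge h1.
  by rewrite /F n1 n2.
rewrite !sumr_const_nat !mulr_natl subn0 addKn subnDA.
by rewrite addrA.
Qed.

Lemma Mhat1_eq (p q : 'I_b -> R) : isMax j eps p q -> Mhat1 b j eps = Psi j p q.
Proof.
move=> [pf [qf pm]].
set S := [set x : R | exists p q : 'I_b -> R, Phat0 eps p /\ Phat0 eps q /\ x = Psi j p q]%classic.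
have inS : S (Psi j p q) by exists p, q.
have ub : ubound S (Psi j p q).
  by move=> x [p' [q' [p'f [q'f ->]]]]; apply: pm.
apply/eqP; rewrite eq_le; apply/andP; split.
  by apply: ge_sup => //; exists (Psi j p q).
by apply: sup_upper_bound => //; split; [exists (Psi j p q)|exists (Psi j p q)].
Qed.


Hypotheses (b1 : (1 < b)%N) (j2 : (2 <= j)%N) (e0 : 0 < eps).

Lemma block (p q : 'I_b -> R) : isMax j eps p q ->
  (forall i k, eps < p i -> eps < q i -> eps < p k -> eps < q k ->
    p i = p k /\ q i = q k) ->
  exists (s : 'S_b) (l1 l2 : nat) (alpha beta delta eta : R),
      [/\ (l1 + l2 <= b)%N,
          eps <= alpha, eps <= beta, eps <= delta & eps <= eta] /\
      l1%:R * eps + l2%:R * alpha + (b - l1 - l2)%:R * beta = 1 /\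
      l1%:R * delta + l2%:R * eps + (b - l1 - l2)%:R * eta = 1 /\
      (forall i, p (s i) = blockvec b l1 l2 eps alpha beta i /\
                   q (s i) = blockvec b l1 l2 delta eps eta i).
Proof.
move=> pm G.
have [pf [qf _]] := pm.
have [pe ps] := feasP pf; have [qe qs] := feasP qf.
pose P0 := fun l => p l == eps.
pose Q0 := fun l => q l == eps.
pose e := enum 'I_b.
pose s1 := [seq l <- e | P0 l].
pose r := [seq l <- e | predC P0 l].
pose s2 := [seq l <- r | Q0 l].
pose s3 := [seq l <- r | predC Q0 l].
pose sq := s1 ++ s2 ++ s3.
have h1 : perm_eq (s2 ++ s3) r by rewrite perm_filterC.
have h2 : perm_eq (s1 ++ r) e by rewrite perm_filterC.
have h3 : perm_eq sq e by apply: perm_trans h2; rewrite perm_cat2l.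
have h4 : perm_eq sq (ord_tuple b) by rewrite val_ord_tuple.
have [sg Hsg] := tuple_permP h4.
have nthsg (i : 'I_b) : nth i sq i = sg i.
  by rewrite Hsg -tnth_nth tnth_mktuple tnth_ord_tuple.
have szsq : size sq = b by rewrite (perm_size h3) size_enum_ord.
set l1 := size s1; set l2 := size s2.
have hl : (l1 + l2 <= b)%N by rewrite -szsq /sq !size_cat addnA leq_addr.
pose delta := if [pick l | P0 l] is Some l0 then q l0 else eps.
pose alpha := if [pick l | ~~ P0 l && Q0 l] is Some l0 then p l0 else eps.
pose beta := if [pick l | ~~ P0 l && ~~ Q0 l] is Some l0 then p l0 else eps.
pose eta := if [pick l | ~~ P0 l && ~~ Q0 l] is Some l0 then q l0 else eps.
have dP l : P0 l -> q l = delta.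
  rewrite /delta; case: pickP => [l0 h0|h0] hl0; last by rewrite h0 in hl0.
  by apply: (@P_share R b j eps b1 j2 e0 p q l l0 pm); apply/eqP.
have aQ l : ~~ P0 l -> Q0 l -> p l = alpha.
  rewrite /alpha; case: pickP => [l0 /andP[_ h0]|h0] nl ql; last by move: (h0 l); rewrite nl ql.
  by apply: (@Q_share R b j eps b1 j2 e0 p q l l0 pm); apply/eqP.
have ltP l : ~~ P0 l -> eps < p l by move=> h; rewrite lt_neqAle eq_sym h pe.
have ltQ l : ~~ Q0 l -> eps < q l by move=> h; rewrite lt_neqAle eq_sym h qe.
have bI l : ~~ P0 l -> ~~ Q0 l -> p l = beta /\ q l = eta.
  rewrite /beta /eta; case: pickP => [l0 /andP[n0 m0]|h0] nl ml; last first.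
    by move: (h0 l); rewrite nl ml.
  by apply: G; apply: ltP || apply: ltQ.
have dge : eps <= delta by rewrite /delta; case: pickP.
have age : eps <= alpha by rewrite /alpha; case: pickP.
have bge : eps <= beta by rewrite /beta; case: pickP.
have ege : eps <= eta by rewrite /eta; case: pickP.
have blk i : p (sg i) = blockvec b l1 l2 eps alpha beta i /\
             q (sg i) = blockvec b l1 l2 delta eps eta i.
  rewrite -nthsg /blockvec /sq nth_cat -/l1.
  case: (ltnP i l1) => il1.
    have : nth i s1 i \in s1 by apply: mem_nth.
    rewrite mem_filter => /andP[h _].
    by split; [apply/eqP|apply: dP].
  rewrite nth_cat -/l2.
  have E2 : (i < l1 + l2)%N = (i - l1 < l2)%N by rewrite ltn_subLR.
  rewrite E2; case: (ltnP (i - l1) l2) => il2.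
    have : nth i s2 (i - l1) \in s2 by apply: mem_nth.
    rewrite mem_filter => /andP[qq]; rewrite mem_filter => /andP[pp _].
    by split; [apply: aQ|apply/eqP].
  have : nth i s3 (i - l1 - l2) \in s3.
    apply: mem_nth; rewrite -subnDA ltn_subLR; last by move: il1 il2; clear; lia.
    by move: szsq; rewrite /sq !size_cat addnA => ->.
  rewrite mem_filter => /andP[qq]; rewrite mem_filter => /andP[pp _].
  exact: bI.
exists sg, l1, l2, alpha, beta, delta, eta.
split; first by split.
split.
  rewrite -(@sum_blockvec l1 l2 eps alpha beta hl) -ps [RHS](reindex_inj (@perm_inj _ sg)).
  by apply: eq_bigr => i _; case: (blk i) => -> _.
split; last exact: blk.
rewrite -(@sum_blockvec l1 l2 delta eps eta hl) -qs [RHS](reindex_inj (@perm_inj _ sg)).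
by apply: eq_bigr => i _; case: (blk i) => _ ->.
Qed.

End Fin.

Theorem mainTheorem14 (R : realType) (b j : nat) (eps : R) :
  (3 <= b)%N -> (2 <= j)%N -> (j <= b - 1)%N ->
  0 < eps -> eps < (b%:R)^-1 ->
  exists (p q : 'I_b -> R),
    Phat0 eps p /\ Phat0 eps q /\ Psi j p q = Mhat1 b j eps /\
    exists (s : 'S_b) (l1 l2 : nat) (alpha beta delta eta : R),
      [/\ (l1 + l2 <= b)%N,
          eps <= alpha, eps <= beta, eps <= delta & eps <= eta] /\
      l1%:R * eps + l2%:R * alpha + (b - l1 - l2)%:R * beta = 1 /\
      l1%:R * delta + l2%:R * eps + (b - l1 - l2)%:R * eta = 1 /\
      ( (forall i, p (s i) = blockvec b l1 l2 eps alpha beta i /\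
                   q (s i) = blockvec b l1 l2 delta eps eta i)
      \/ (forall i, q (s i) = blockvec b l1 l2 eps alpha beta i /\
                    p (s i) = blockvec b l1 l2 delta eps eta i)).
Proof.
move=> b3 j2 jb e0 eb.
have b1 : (1 < b)%N by apply: leq_trans b3.
have b0 : (0 < b)%N by apply: leq_trans b3.
have [p0 [q0 m0]] := @exists_max R b j eps e0 eb b0.
have [p [q [m G]]] := @good_exists R b j eps e0 p0 q0 m0.
have [s [l1 [l2 [al [be [de [et H]]]]]]] := @block R b j eps b1 j2 e0 p q m G.
exists p, q; split; first by case: m.
split; first by case: m => _ [].
split; first by rewrite (@Mhat1_eq R b j eps p q m).
exists s, l1, l2, al, be, de, et.
case: H => [h1 [h2 [h3 h4]]].
exact: (conj h1 (conj h2 (conj h3 (or_introl h4)))).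

Qed.
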